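(* Let $Q$ be a graph consisting of a single vertex $v$ and a single loop edge, and let $X$ be a locally standard $T^m$-pseudomanifold over $Q$ (i.e. with $l=0$, $n=1$ and orbit space $Q$, the vertex being the $0$-stratum and the open loop the $1$-stratum), with orbit projection $\pi:X\to Q$. Then there exists a continuous section $s:Q\to X$ of $\pi$, i.e. $\pi\circ s=\mathrm{id}_Q$.
   Context: Notation: $U(1)=\{z\in\mathbb C:|z|=1\}$, $T^m=U(1)^m$, $\mathbb C^\times=\mathbb C\setminus\{0\}$, open cone $\mathring c(L)=L\times[0,1)/(L\times\{0\})$ ($\mathring c(\emptyset)$ a point). A topological stratified pseudomanifold is a Hausdorff space $Q$ with closed filtration $Q=Q_{l+n}\supsetneq\cdots\supsetneq Q_l\supsetneq\emptyset$ whose strata (components of $Q_i\setminus Q_{i-1}$) are $i$-manifolds, with $\mathring Q=Q_{l+n}\setminus Q_{l+n-1}$ dense, and each point $p$ of an $(l+i)$-stratum having a filtration-preserving neighborhood $O\times\mathring c(L_p)$, $O\subset\mathbb R^{l+i}$ contractible open, $L_p$ a compact $(n-i-1)$-dimensional topological stratified pseudomanifold (the link). Locally standard $T^m$-pseudomanifold $X$ (dimension $l+m+n$, $l\ge0$, $m\ge n\ge0$): a second-countable compact Hausdorff space with effective continuous $T^m$-action with subtorus isotropy groups, filtered by $X_{l+2i+(m-n)}=X_{l+2i+1+(m-n)}=\{x:\dim T^mx\le i+m-n\}$ ($0\le i\le n$), which is a topological stratified pseudomanifold with no orbits of dimension $<m-n$ and with free orbits if $l+n\ne0$, and inductively: if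 $l+n=0$, $X$ is a finite disjoint union of copies of $T^m$; otherwise each $x\in X_{l+2i+(m-n)}\setminus X_{l+2(i-1)+(m-n)}$ has an invariant open neighborhood weakly equivariantly homeomorphic to $O\times(\Omega\times U(1)^{m-n})\times\mathring c(L_x)$ with $O\subset\mathbb R^l$ contractible open, $\Omega\subset(\mathbb C^\times)^i$ invariant open, $L_x$ a compact $(2n-2i-1)$-dimensional locally standard $T_x$-pseudomanifold ($T_x\cong T^{n-i}$ the isotropy group), $T^m\cong U(1)^{i+m-n}\times T_x$ acting freely on the middle factor and via $L_x$ on the cone. The orbit space $Q=X/T^m$ with filtration $Q_{l+i}=X_{l+2i+(m-n)}/T^m$ is a topological stratified pseudomanifold of dimension $l+n$. When $l=0,n=1$, $Q$ is a finite graph (vertices $=$ $0$-strata, open edges $=$ $1$-strata), and $X$ is called a locally standard $T^m$-pseudomanifold over a graph; isotropy is a $1$-dimensional subtorus over vertices and trivial over open edges. *)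

(* Defs.v *)
From HB Require Import structures.
From mathcomp Require Import all_boot all_order all_algebra.
From mathcomp Require Import all_classical all_reals.
From mathcomp Require Import topology.
From mathcomp Require Import Rstruct Rstruct_topology.
Set Implicit Arguments. Unset Strict Implicit. Unset Printing Implicit Defensive.
Import Order.TTheory GRing.Theory Num.Theory.
Local Open Scope classical_set_scope.
Local Open Scope ring_scope.

(** Complex numbers, modelled as pairs of (Stdlib) reals with the product
    topology (= the usual topology of C = R^2). *)
Definition C : topologicalType := (Rdefinitions.R * Rdefinitions.R)%type.
Definition cmul (a b : C) : C := (a.1 * b.1 - a.2 * b.2, a.1 * b.2 + a.2 * b.1).
Definition cone : C := (1, 0).
Definition czero : C := (0, 0).
Definition cnorm2 (z : C) : Rdefinitions.R := z.1 ^+ 2 + z.2 ^+ 2.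
Definition U1 : set C := [set z | cnorm2 z = 1].

(** T^m = U(1)^m, realised as the set of row vectors in C^m with all
    coordinates in U(1); group law is coordinatewise multiplication. *)
Definition torus (m : nat) : set 'rV[C]_m := [set t | forall i, U1 (t ord0 i)].
Arguments torus m : clear implicits.
Definition tmul (m : nat) (s t : 'rV[C]_m) : 'rV[C]_m :=
  \row_i cmul (s ord0 i) (t ord0 i).
Definition tone (m : nat) : 'rV[C]_m := \row_i cone.

Arguments tone m : clear implicits.

Definition homeo_on (X Y : topologicalType) (A : set X) (B : set Y) (f : X -> Y) :=
  {within A, continuous f} /\
  exists g : Y -> X, {within B, continuous g} /\
    (forall a, A a -> B (f a) /\ g (f a) = a) /\
    (forall b, B b -> A (g b) /\ f (g b) = b).

Definition torus_aut (m : nat) (rho : 'rV[C]_m -> 'rV[C]_m) :=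
  homeo_on (torus m) (torus m) rho /\
  forall s t, torus m s -> torus m t -> rho (tmul s t) = tmul (rho s) (rho t).

Definition torus_action (m : nat) (X : topologicalType) (act : 'rV[C]_m -> X -> X) :=
  (forall x, act (tone m) x = x) /\
  (forall s t x, torus m s -> torus m t -> act (tmul s t) x = act s (act t x)) /\
  {within torus m `*` [set: X], continuous (fun p => act p.1 p.2)}.

Definition effective_action (m : nat) (X : Type) (act : 'rV[C]_m -> X -> X) :=
  forall t, torus m t -> (forall x, act t x = x) -> t = tone m.

Definition stab (m : nat) (X : Type) (act : 'rV[C]_m -> X -> X) (x : X) : set 'rV[C]_m :=
  [set t | torus m t /\ act t x = x].

Definition tinv (m : nat) (t : 'rV[C]_m) : 'rV[C]_m := \row_i ((t ord0 i).1, - (t ord0 i).2).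
Definition subtorus (m : nat) (S : set 'rV[C]_m) :=
  S `<=` torus m /\ S (tone m) /\
  (forall s t, S s -> S t -> S (tmul s t)) /\ (forall t, S t -> S (tinv t)) /\
  closed S /\ connected S.

Definition free_pt (m : nat) (X : Type) (act : 'rV[C]_m -> X -> X) (x : X) :=
  forall t, torus m t -> act t x = x -> t = tone m.

Definition invariant (m : nat) (X : Type) (act : 'rV[C]_m -> X -> X) (U : set X) :=
  forall t y, torus m t -> U y -> U (act t y).

(** Local model at a free point (i = 1):  Ω × U(1)^(m-1) with Ω ⊆ C^× open
    and U(1)-invariant.  The factor Ω is put at coordinate j of C^m. *)
Definition free_model (m : nat) (j : 'I_m) (Om : set C) : set 'rV[C]_m :=
  [set u | Om (u ord0 j) /\ forall i, i != j -> U1 (u ord0 i)].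

(** Local model at a point of the 0-stratum (i = 0):
    U(1)^(m-1) × c°(L), L = k copies of U(1) (the only compact 1-dimensional
    locally standard T^1-pseudomanifolds).  The open cone over k circles is
    realised as the wedge of k open unit discs in C^k glued at their centres
    (the coordinate discs), with U(1) acting by scalar multiplication.
    The U(1)^(m-1) factor occupies the coordinates i <> j of C^m (coordinate
    j is the dummy value 1); the T_x = U(1) factor acts through coordinate j. *)
Definition vertex_model (m k : nat) (j : 'I_m) : set ('rV[C]_m * 'rV[C]_k)%type :=
  [set p : ('rV[C]_m * 'rV[C]_k)%type | p.1 ord0 j = cone /\ (forall i, i != j -> U1 (p.1 ord0 i)) /\
           (forall a, cnorm2 (p.2 ord0 a) < 1) /\
           (forall a b, a != b -> p.2 ord0 a = czero \/ p.2 ord0 b = czero)].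

Arguments vertex_model m k j : clear implicits.

Definition vertex_act (m k : nat) (j : 'I_m) (t : 'rV[C]_m)
    (p : ('rV[C]_m * 'rV[C]_k)%type) : ('rV[C]_m * 'rV[C]_k)%type :=
  (\row_i (if i == j then p.1 ord0 i else cmul (t ord0 i) (p.1 ord0 i)),
   \row_a cmul (t ord0 j) (p.2 ord0 a)).

(** Locally standard T^m-pseudomanifold with l = 0, n = 1 (i.e. over a graph),
    the inductive definition being unfolded for this case. *)
Definition locally_standard_over_graph (m : nat) (X : topologicalType)
    (act : 'rV[C]_m -> X -> X) :=
  (0 < m)%N /\
  @second_countable X /\ compact [set: X] /\ hausdorff_space X /\
  torus_action act /\ effective_action act /\
  (forall x, subtorus (stab act x)) /\
  dense [set x | free_pt act x] /\
  (forall x, free_pt act x ->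
     exists (U : set X) (Om : set C) (j : 'I_m) (rho : 'rV[C]_m -> 'rV[C]_m)
            (phi : X -> 'rV[C]_m),
       [/\ open U /\ U x /\ invariant act U,
           open Om /\ ~ Om czero /\ (forall z w, U1 z -> Om w -> Om (cmul z w)),
           torus_aut rho,
           homeo_on U (free_model j Om) phi &
           forall t y, torus m t -> U y -> phi (act t y) = tmul (rho t) (phi y)]) /\
  (* local standardness at points with orbit of dimension m-1 *)
  (forall x, ~ free_pt act x ->
     exists (U : set X) (k : nat) (j : 'I_m) (rho : 'rV[C]_m -> 'rV[C]_m)
            (phi : X -> ('rV[C]_m * 'rV[C]_k)%type),
       [/\ open U /\ U x /\ invariant act U, (0 < k)%N,
           torus_aut rho,
           homeo_on U (vertex_model m k j) phi &
           forall t y, torus m t -> U y -> phi (act t y) = vertex_act j (rho t) (phi y)]).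

Definition orbit_projection (m : nat) (X Q : topologicalType)
    (act : 'rV[C]_m -> X -> X) (pi : X -> Q) :=
  (forall q, exists x, pi x = q) /\
  (forall V : set Q, open V <-> open (pi @^-1` V)) /\
  (forall x y, pi x = pi y <-> exists t, torus m t /\ y = act t x).

(** Q is the graph with a single vertex v and a single loop edge: Q is
    homeomorphic to a circle, and its 0-stratum (the image of the non-free
    orbits) is the single point v. *)
Definition loop_graph_orbit_space (m : nat) (X Q : topologicalType)
    (act : 'rV[C]_m -> X -> X) (pi : X -> Q) :=
  (exists h : Q -> C, homeo_on [set: Q] U1 h) /\
  exists v : Q, forall x, ~ free_pt act x <-> pi x = v.

(* Main.v *)
Require Import Defs.
From HB Require Import structures.
From mathcomp Require Import all_boot all_order all_algebra.
From mathcomp Require Import all_classical all_reals.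
From mathcomp Require Import topology normedtype realfun.
From mathcomp Require Import Rstruct Rstruct_topology.
Import Order.TTheory GRing.Theory Num.Theory.
Local Open Scope classical_set_scope.
Local Open Scope ring_scope.
Set Implicit Arguments. Unset Strict Implicit.
From mathcomp Require Import ring lra.
Local Notation R := Rdefinitions.R.
Definition cconj (z : C) : C := (z.1, - z.2).
Lemma cnorm2_mul a b : cnorm2 (cmul a b) = cnorm2 a * cnorm2 b.
Proof. rewrite /cnorm2 /cmul /=; ring. Qed.
Lemma U1_mul a b : U1 a -> U1 b -> U1 (cmul a b).
Proof. by rewrite /U1 /= cnorm2_mul => -> ->; rewrite mulr1. Qed.
Lemma cmulA a b c : cmul a (cmul b c) = cmul (cmul a b) c.
Proof. rewrite /cmul /=; congr (_, _); ring. Qed.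
Lemma cmulC a b : cmul a b = cmul b a.
Proof. rewrite /cmul /=; congr (_, _); ring. Qed.
Lemma cmul1 a : cmul cone a = a.
Proof. case: a => x y; rewrite /cmul /cone /=; congr (_, _); ring. Qed.
Lemma cmul0 a : cmul a czero = czero.
Proof. rewrite /cmul /czero /=; congr (_, _); ring. Qed.
Lemma cmul_conj z : cmul (cconj z) z = (cnorm2 z, 0).
Proof. rewrite /cmul /cconj /cnorm2 /=; congr (_, _); ring. Qed.
Lemma cconjU1 z : U1 z -> U1 (cconj z).
Proof. by rewrite /U1 /cnorm2 /= sqrrN. Qed.
Lemma cmul_conjU1 z : U1 z -> cmul (cconj z) z = cone.
Proof. by move=> hz; rewrite cmul_conj hz. Qed.
Lemma cnorm2_ge0 z : 0 <= cnorm2 z.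
Proof. by rewrite /cnorm2 addr_ge0 // sqr_ge0. Qed.
Lemma cnorm2_eq0 z : cnorm2 z = 0 -> z = czero.
Proof.
case: z => x y; rewrite /cnorm2 /= => /eqP; rewrite paddr_eq0 ?sqr_ge0 //.
by rewrite !sqrf_eq0 => /andP[/eqP-> /eqP->].
Qed.
Lemma cnorm2_0 : cnorm2 czero = 0.
Proof. by rewrite /cnorm2 /czero /= expr0n /= addr0. Qed.
Lemma cunit z : z <> czero ->
  exists w, U1 w /\ cmul w z = (Num.sqrt (cnorm2 z), 0).
Proof.
move=> nz; set n := cnorm2 z; set r := Num.sqrt n.
have n0 : 0 < n by rewrite lt_neqAle cnorm2_ge0 andbT; apply/eqP => /esym /cnorm2_eq0.
have r0 : 0 < r by rewrite sqrtr_gt0.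
have rr : r * r = n by rewrite -expr2 sqr_sqrtr // ltW.
exists (cmul (r^-1, 0) (cconj z)); split.
  rewrite /U1 /= cnorm2_mul.
  have -> : cnorm2 (cconj z) = n by rewrite /n /cnorm2 /= sqrrN.
  have -> : cnorm2 (r^-1, 0) = r^-1 * r^-1 by rewrite /cnorm2 /= expr2 expr0n /= addr0.
  by rewrite -rr; field; rewrite gt_eqF.
rewrite -cmulA cmul_conj /cmul /= -/n -rr; congr (_, _); last by ring.
by field; rewrite gt_eqF.
Qed.

Lemma cont_comp_within (T S U : topologicalType) (f : T -> S) (g : S -> U) (B : set S) y :
  {for y, continuous f} -> (\forall z \near y, B (f z)) ->
  {within B, continuous g} -> {for y, continuous (g \o f)}.
Proof.
move=> cf nB cg.
have By : B (f y) by exact: nbhs_singleton nB.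
have := cg (f y); rewrite /continuous_at/=.
change (nbhs (f y : subspace B)) with (nbhs_subspace (A:=B) (f y)).
rewrite -(nbhs_subspace_in By) => cg'.
move=> W /= /cg'; rewrite /= withinE => -[V nV VW].
apply: (filterS2 _ _ nB (cf _ nV)) => z Bz Vz /=.
have : (V `&` B) (f z) by [].
rewrite -VW => -[]//.
Qed.

Lemma glue_cont (U : topologicalType) (f g : R -> U) (c : R) :
  continuous f -> continuous g -> f c = g c ->
  continuous (fun t => if t <= c then f t else g t).
Proof.
move=> cf cg fg t.
have [tc|ct|->] := ltgtP t c.
- rewrite /continuous_at (ltW tc).
  apply: (@cvg_trans _ (f @ t)); last exact: cf.
  apply: near_eq_cvg; near=> s.
  have hs : s <= c by apply: ltW; near: s; exact: lt_nbhsl.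
  by rewrite hs.
- rewrite /continuous_at leNgt ct /=.
  apply: (@cvg_trans _ (g @ t)); last exact: cg.
  apply: near_eq_cvg; near=> s.
  have hs : c < s by near: s; exact: lt_nbhsr.
  by rewrite leNgt hs.
- move=> W /=; rewrite lexx => fW.
  have gW : nbhs (g c) W by rewrite -fg.
  have H1 := cf c W fW; have H2 := cg c W gW.
  move: H1 H2; rewrite /= /nbhs /= => H1 H2.
  by apply: filterS (filterI H1 H2) => s [] /=; case: ifP.
Unshelve. all: end_near.
Qed.
Lemma cont_row (T : topologicalType) n (f : T -> 'rV[C]_n) x :
  (forall i, {for x, continuous (fun y => f y ord0 i)}) -> {for x, continuous f}.
Proof.
move=> cf W [P hP hPW].
have : \forall y \near x, forall ij : 'I_1 * 'I_n, P ij.1 ij.2 (f y ij.1 ij.2).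
  apply: filter_forall => -[i j] /=; rewrite (ord1 i).
  by apply: (cf j); exact: hP.
apply: filterS => y hy; apply: hPW => i j; exact: (hy (i, j)).
Qed.
Lemma cont_entry n i : continuous (fun u : 'rV[C]_n => u ord0 i).
Proof.
move=> u W hW /=.
exists (fun a b => if (a == ord0) && (b == i) then W else setT).
  by move=> a b; case: ifP => [/andP[/eqP-> /eqP->]//|_]; exact: filterT.
by move=> N hN; have := hN ord0 i; rewrite !eqxx.
Qed.
Lemma cont_C (T : topologicalType) (f : T -> C) x :
  {for x, continuous (fun y => (f y).1)} -> {for x, continuous (fun y => (f y).2)} ->
  {for x, continuous f}.
Proof.
move=> h1 h2.
have fE : f = (fun y => ((f y).1, (f y).2)) by apply: funext => y; case: (f y).
rewrite /continuous_at fE /=.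
exact: (cvg_pair h1 h2).
Qed.
Lemma cont_C1 : continuous (fun z : C => z.1).
Proof. by move=> z; apply: cvg_fst. Qed.
Lemma cont_C2 : continuous (fun z : C => z.2).
Proof. by move=> z; apply: cvg_snd. Qed.
Lemma cont_sq (T : topologicalType) (f : T -> R) x :
  {for x, continuous f} -> {for x, continuous (fun y => f y ^+ 2)}.
Proof.
move=> h; have -> : (fun y => f y ^+ 2) = (f \* f) by apply: funext => y; rewrite /= expr2.
by rewrite /continuous_at; apply: cvgM.
Qed.
Lemma cont_cnorm2 : continuous cnorm2.
Proof.
move=> z; rewrite /cnorm2; apply: (@cvgD _ R^o); apply: cont_sq; [exact: cont_C1|exact: cont_C2].
Qed.
Lemma cont_sqrt_cnorm2 : continuous (fun z => Num.sqrt (cnorm2 z)).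
Proof. move=> z; apply: continuous_comp; [exact: cont_cnorm2|exact: sqrt_continuous]. Qed.
Lemma U1_one : U1 cone.
Proof. by rewrite /U1 /cnorm2 /cone /= expr1n expr0n /= addr0. Qed.

Lemma cont_pair (T A B : topologicalType) (f : T -> A) (g : T -> B) x :
  {for x, continuous f} -> {for x, continuous g} ->
  {for x, continuous (fun y => (f y, g y))}.
Proof.
move=> cf cg W [[P1 P2] /= [n1 n2] sP].
have h1 := cf _ n1; have h2 := cg _ n2; move: h1 h2; rewrite /= /nbhs /= => h1 h2.
by apply: filterS (filterI h1 h2) => y [h1' h2']; exact: sP.
Qed.
Lemma cont_snd (A B : topologicalType) : continuous (fun p : A * B => p.2).
Proof.
move=> p W hW; exists (setT, W) => /=; first by split => //; exact: filterT.
by move=> [a b] [].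
Qed.

Lemma cont_cst (T U : topologicalType) (c : U) (x : T) : {for x, continuous (fun _ : T => c)}.
Proof. by move=> W /nbhs_singleton Wc; apply: nearW. Qed.

Lemma cont_rowF (T : topologicalType) n (F : 'I_n -> T -> C) x :
  (forall i, {for x, continuous (F i)}) -> {for x, continuous (fun y => \row_i F i y)}.
Proof.
move=> h; apply: cont_row => i.
have e : (fun y => (\row_i F i y) ord0 i) = F i by apply: funext => y; rewrite mxE.
by rewrite e.
Qed.

Lemma torus_entry m t i : torus m t -> U1 (t ord0 i).
Proof. by move=> h; exact: h. Qed.

Definition canonF m (j : 'I_m) (u : 'rV[C]_m) : 'rV[C]_m :=
  \row_i (if i == j then (Num.sqrt (cnorm2 (u ord0 i)), 0) else cone).

Lemma cont_canonF m (j : 'I_m) : continuous (canonF j).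
Proof.
move=> u; rewrite /canonF; apply: cont_rowF => i.
case: (i == j); last exact: cont_cst.
apply: cont_C => /=; last exact: cont_cst.
apply: (@continuous_comp _ _ _ (fun y : 'rV[C]_m => y ord0 i) (fun z => Num.sqrt (cnorm2 z)));
  [exact: cont_entry|exact: cont_sqrt_cnorm2].
Qed.

Lemma canonF_E m (j : 'I_m) (Om : set C) p : ~ Om czero -> free_model j Om p ->
  exists w, torus m w /\ tmul w p = canonF j p.
Proof.
move=> nO [Opj Ui].
have nz : p ord0 j <> czero by move=> e; apply: nO; rewrite -e.
have [w0 [Uw0 ew0]] := cunit nz.
exists (\row_i (if i == j then w0 else cconj (p ord0 i))); split.
  move=> i; rewrite mxE; case: ifP => [_|/negbT nij]; first exact: Uw0.
  exact/cconjU1/Ui.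
apply/rowP => i; rewrite /tmul /canonF !mxE.
case: ifP => [/eqP->|/negbT nij]; first exact: ew0.
exact: cmul_conjU1 (Ui _ nij).
Qed.

Lemma canonF_I m (j : 'I_m) p w : torus m w -> canonF j (tmul w p) = canonF j p.
Proof.
move=> tw; apply/rowP => i; rewrite /tmul /canonF !mxE.
by case: ifP => // _; rewrite cnorm2_mul (tw i) mul1r.
Qed.

Definition canonV m k (p : ('rV[C]_m * 'rV[C]_k)%type) : ('rV[C]_m * 'rV[C]_k)%type :=
  (\row_i cone, \row_a (Num.sqrt (cnorm2 (p.2 ord0 a)), 0)).

Lemma cont_canonV m k : continuous (@canonV m k).
Proof.
move=> p; rewrite /canonV; apply: (@cont_pair ('rV[C]_m * 'rV[C]_k)%type 'rV[C]_m 'rV[C]_k (fun _ => \row_i cone)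
  (fun y : ('rV[C]_m * 'rV[C]_k)%type => \row_a (Num.sqrt (cnorm2 (y.2 ord0 a)), 0))); first exact: cont_cst.
apply: cont_rowF => a.
apply: cont_C => /=; last exact: cont_cst.
apply: (@continuous_comp _ _ _ (fun y : ('rV[C]_m * 'rV[C]_k)%type => y.2 ord0 a) (fun z => Num.sqrt (cnorm2 z))); last exact: cont_sqrt_cnorm2.
apply: (@continuous_comp _ _ _ (fun y : ('rV[C]_m * 'rV[C]_k)%type => y.2) (fun z : 'rV[C]_k => z ord0 a)); [exact: cont_snd|exact: cont_entry].
Qed.

Lemma sqrt_cnorm2_0 : (Num.sqrt (cnorm2 czero), 0) = czero.
Proof. by rewrite cnorm2_0 sqrtr0. Qed.

Lemma canonV_E m k (j : 'I_m) p : vertex_model m k j p ->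
  exists w, torus m w /\ vertex_act j w p = canonV p.
Proof.
move=> [p1j [Ui [_ disj]]].
have [[a nza]|nex] := pselect (exists a, p.2 ord0 a <> czero).
  have [w0 [Uw0 ew0]] := cunit nza.
  exists (\row_i (if i == j then w0 else cconj (p.1 ord0 i))); split.
    move=> i; rewrite mxE; case: ifP => [_|/negbT nij]; first exact: Uw0.
    exact/cconjU1/Ui.
  rewrite /vertex_act /canonV; congr (_, _); apply/rowP => i; rewrite !mxE.
    case: ifP => [/eqP->|/negbT nij]; first exact: p1j.
    by rewrite (negbTE nij) cmul_conjU1 //; exact: Ui.
  rewrite eqxx; have [->//|nia] := eqVneq i a.
  have : p.2 ord0 i = czero by case: (disj a i) => //; rewrite eq_sym.
  by move=> ->; rewrite cmul0 sqrt_cnorm2_0.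
exists (\row_i (if i == j then cone else cconj (p.1 ord0 i))); split.
  move=> i; rewrite mxE; case: ifP => [_|/negbT nij]; first exact: U1_one.
  exact/cconjU1/Ui.
rewrite /vertex_act /canonV; congr (_, _); apply/rowP => i; rewrite !mxE.
  case: ifP => [/eqP->|/negbT nij]; first exact: p1j.
  by rewrite (negbTE nij) cmul_conjU1 //; exact: Ui.
have -> : p.2 ord0 i = czero by apply: contrapT => h; apply: nex; exists i.
by rewrite eqxx cmul0 sqrt_cnorm2_0.
Qed.

Lemma canonV_I m k (j : 'I_m) (p : ('rV[C]_m * 'rV[C]_k)%type) w : torus m w -> canonV (vertex_act j w p) = canonV p.
Proof.
move=> tw; rewrite /canonV /vertex_act /=; congr (_, _); apply/rowP => a; rewrite !mxE.
by rewrite cnorm2_mul (tw j) mul1r.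
Qed.

Lemma torus_tmul m s t : torus m s -> torus m t -> torus m (tmul s t).
Proof. by move=> hs ht i; rewrite /tmul mxE; apply: U1_mul. Qed.
Lemma torus_tone m : torus m (tone m).
Proof. by move=> i; rewrite /tone mxE; exact: U1_one. Qed.
Lemma torus_tinv m t : torus m t -> torus m (tinv t).
Proof. by move=> ht i; rewrite /tinv mxE; apply: (cconjU1 (ht i)). Qed.
Lemma tmul_tinv m t : torus m t -> tmul (tinv t) t = tone m.
Proof.
move=> ht; apply/rowP => i; rewrite /tmul /tone !mxE.
by rewrite -(cmul_conjU1 (ht i)).
Qed.

Section Main.
Variables (m : nat) (X Q : topologicalType) (act : 'rV[C]_m -> X -> X) (pi : X -> Q).
Hypothesis Hact : torus_action act.
Hypothesis Hpi : orbit_projection act pi.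

Lemma act1 x : act (tone m) x = x.
Proof. by case: Hact => h _; exact: h. Qed.
Lemma actM s t x : torus m s -> torus m t -> act (tmul s t) x = act s (act t x).
Proof. by case: Hact => _ [h _]; exact: h. Qed.
Lemma act_cont c : torus m c -> continuous (act c).
Proof.
case: Hact => _ [_ hc] tc x.
have := @cont_comp_within X _ X (fun y => (c, y)) (fun p => act p.1 p.2) (torus m `*` setT) x.
apply => //.
- move=> W [[A B] /= [nA nB] sAB]; apply: filterS nB => y By; apply: sAB; split => //; exact: nbhs_singleton nA.
- by apply: nearW => y.
Qed.
Lemma pi_act t x : torus m t -> pi (act t x) = pi x.
Proof. by case: Hpi => _ [_ h] tt; apply/esym/h; exists t. Qed.
Lemma pi_orbit x y : pi x = pi y -> exists t, torus m t /\ y = act t x.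
Proof. by case: Hpi => _ [_ h] /h. Qed.
Lemma act_inv c x : torus m c -> act (tinv c) (act c x) = x.
Proof. move=> tc; rewrite -actM; [by rewrite tmul_tinv // act1|exact: torus_tinv|by []]. Qed.

Lemma pre_im_inv (A : set X) : Defs.invariant act A -> pi @^-1` (pi @` A) = A.
Proof.
move=> iA; apply/seteqP; split => [z [y Ay /pi_orbit [t [tt ->]]]|z Az].
  exact: iA.
by exists z.
Qed.
Lemma open_im_inv (A : set X) : Defs.invariant act A -> open A -> open (pi @` A).
Proof. by move=> iA oA; case: Hpi => _ [h _]; apply/h; rewrite pre_im_inv. Qed.

Definition local_section (V : set Q) (s : Q -> X) :=
  open V /\ (forall q, V q -> {for q, continuous s}) /\ (forall q, V q -> pi (s q) = q).

Definition pk (q : Q) : X := proj1_sig (cid (Hpi.1 q)).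
Lemma pkP q : pi (pk q) = q.
Proof. exact: (proj2_sig (cid (Hpi.1 q))). Qed.

Lemma chart_section (M : topologicalType) (U : set X) (B : set M) (phi : X -> M)
  (alpha : 'rV[C]_m -> M -> M) (rho : 'rV[C]_m -> 'rV[C]_m) (canon : M -> M) :
  open U -> Defs.invariant act U -> homeo_on U B phi ->
  (forall t, torus m t -> torus m (rho t)) ->
  (forall w, torus m w -> exists t, torus m t /\ rho t = w) ->
  (forall t y, torus m t -> U y -> phi (act t y) = alpha (rho t) (phi y)) ->
  continuous canon ->
  (forall p, B p -> exists w, torus m w /\ alpha w p = canon p) ->
  (forall p w, B p -> torus m w -> canon (alpha w p) = canon p) ->
  forall y0, U y0 -> exists V s, V (pi y0) /\ local_section V s.
Proof.
move=> oU iU [cphi [g [cg [hUB hBU]]]] rhoT rhoS eqv ccan canE canI y0 Uy0.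
pose S y := g (canon (phi y)).
have S_act : forall y, U y -> exists t, torus m t /\ S y = act t y /\ phi (act t y) = canon (phi y).
  move=> y Uy; have [w [tw ew]] := canE _ (hUB _ Uy).1.
  have [t [tt rt]] := rhoS _ tw.
  have e : phi (act t y) = canon (phi y) by rewrite eqv // rt.
  exists t; split => //; split => //.
  by rewrite /S -e (hUB _ (iU _ _ tt Uy)).2.
have canB : forall y, U y -> B (canon (phi y)).
  move=> y Uy; have [t [tt [_ e]]] := S_act y Uy.
  by rewrite -e; exact: (hUB _ (iU _ _ tt Uy)).1.
have S_inv : forall y1 y2, U y1 -> pi y1 = pi y2 -> S y1 = S y2.
  move=> y1 y2 U1 /pi_orbit [t [tt ->]].
  by rewrite /S eqv // canI //; [exact: (hUB _ U1).1|exact: rhoT].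
have S_cont : forall y, U y -> {for y, continuous S}.
  move=> y Uy.
  apply: (@cont_comp_within _ _ _ (canon \o phi) g B) => //.
  - apply: continuous_comp; last exact: ccan.
    by move: cphi; rewrite continuous_open_subspace // => /(_ y (mem_set Uy)).
  - have nU : \forall z \near y, U z by apply: open_nbhs_nbhs.
    by apply: filterS nU => z /canB.
have UV : forall z, (pi @` U) (pi z) -> U z.
  by move=> z hz; rewrite -(pre_im_inv iU).
pose s q := S (pk q).
exists (pi @` U), s; split; first by exists y0.
split; first exact: open_im_inv.
split; last first.
  move=> q [y Uy <-]; have Uk : U (pk (pi y)) by apply: UV; rewrite pkP; exists y.
  have [t [tt [e _]]] := S_act _ Uk.
  by rewrite /s e pi_act // pkP.
move=> q [y Uy qE] W hW.
have Uk : U (pk q) by apply: UV; rewrite pkP -qE; exists y.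
move: hW; rewrite nbhsE => -[W' [oW' W'S] W'W].
pose O := [set z | U z /\ W' (S z)].
have iO : Defs.invariant act O.
  move=> t z tt [Uz Wz]; split; first exact: iU.
  by rewrite -(S_inv z) // pi_act.
have oO : open O.
  rewrite openE => z [Uz Wz].
  have nU : nbhs z U by apply: open_nbhs_nbhs.
  have nW : nbhs z (S @^-1` W') by apply: (S_cont z Uz); exact: open_nbhs_nbhs.
  exact: filterI nU nW.
have qO : (pi @` O) q by exists (pk q); [split|exact: pkP].
apply: filterS (open_nbhs_nbhs (conj (open_im_inv iO oO) qO)).
move=> q' [y' [Uy' Wy'] <-]; apply: W'W; rewrite /s -(S_inv y') //.
by rewrite pkP.
Qed.



Hypothesis HX : locally_standard_over_graph act.

Lemma aut_props (rho : 'rV[C]_m -> 'rV[C]_m) : torus_aut rho ->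
  (forall t, torus m t -> torus m (rho t)) /\
  (forall w, torus m w -> exists t, torus m t /\ rho t = w).
Proof.
move=> [[_ [g [_ [h1 h2]]]] _]; split; first by move=> t /h1 [].
by move=> w /h2 [tg e]; exists (g w).
Qed.

Lemma LS q : exists V s, V q /\ local_section V s.
Proof.
case: HX => _ [_ [_ [_ [_ [_ [_ [_ [HF HV]]]]]]]].
rewrite -(pkP q); set x := pk q.
have [fx|nfx] := pselect (free_pt act x).
  have [U [Om [j [rho [phi [[oU [Ux iU]] [_ [nO _]] raut hom eqv]]]]]] := HF x fx.
  have [rT rS] := aut_props raut.
  apply: (@chart_section _ U (free_model j Om) phi (@tmul m) rho (canonF j)) => //.
  - exact: cont_canonF.
  - by move=> p hp; apply: canonF_E hp.
  - by move=> p w _ tw; apply: canonF_I.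
have [U [k [j [rho [phi [[oU [Ux iU]] _ raut hom eqv]]]]]] := HV x nfx.
have [rT rS] := aut_props raut.
apply: (@chart_section _ U (vertex_model m k j) phi (vertex_act j) rho (@canonV m k)) => //.
- exact: cont_canonV.
- by move=> p hp; apply: canonV_E.
- by move=> p w _ tw; apply: canonV_I.
Qed.

Definition clamp (u v t : R) : R := if t <= u then u else if t <= v then t else v.

Lemma cont_clamp u v : u <= v -> continuous (clamp u v).
Proof.
move=> uv; rewrite /clamp; apply: glue_cont.
- by move=> t; apply: cont_cst.
- apply: glue_cont => //; [move=> t; exact: cvg_id|move=> t; exact: cont_cst].
- by rewrite uv.
Qed.

Lemma clamp_in u v t : u <= v -> u <= clamp u v t <= v.
Proof.
move=> uv; rewrite /clamp; case: ifP => [_|/negbT]; first by rewrite lexx uv.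
rewrite -ltNge => ut; case: ifP => [tv|_]; first by rewrite ltW.
by rewrite uv lexx.
Qed.

Lemma clamp_id u v t : u <= t <= v -> clamp u v t = t.
Proof.
move=> /andP[ut tv]; rewrite /clamp tv; case: ifP => // tu.
by apply/eqP; rewrite eq_le ut.
Qed.

Lemma lift (g : R -> Q) : continuous g -> forall a b x0, a <= b -> pi x0 = g a ->
  exists sg : R -> X, continuous sg /\ sg a = x0 /\ forall t, a <= t <= b -> pi (sg t) = g t.
Proof.
move=> cg a b x0 ab px0.
pose A := [set tau : R | a <= tau <= b /\ exists sg : R -> X,
   continuous sg /\ sg a = x0 /\ forall t, a <= t <= tau -> pi (sg t) = g t].
have Aa : A a.
  split; first by rewrite lexx ab.
  exists (fun _ => x0); split; first by move=> t; apply: cont_cst.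
  split => // t /andP[hat ta]; have -> : t = a by apply/eqP; rewrite eq_le ta hat.
  done.
have ubA : ubound A b by move=> t [/andP[_ ]].
have hsA : has_sup A by split; [exists a|exists b].
set ts := sup A.
have ats : a <= ts by apply: sup_upper_bound.
have tsb : ts <= b by apply: ge_sup => //; exists a.
have [V [s [Vg [oV [cs ps]]]]] := LS (g ts).
have : nbhs ts (g @^-1` V) by apply: cg; exact: open_nbhs_nbhs.
move=> /nbhs_ballP [e e0 heV].
have [tau Atau ltau] := sup_adherent e0 hsA.
have taus : tau <= ts by exact: (sup_upper_bound hsA Atau).
rewrite -/ts in ltau.
have {}e0 : 0 < e by [].
move: Atau => [/andP[atau taub] [sg [csg [sga psg]]]].
pose tau' := Num.min b (ts + e / 2).
have e2 : 0 < e / 2 by rewrite divr_gt0.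
have tt' : tau <= tau' by rewrite le_min taub /= (le_trans taus) // lerDl ltW.
have inV : forall t, tau <= t <= tau' -> V (g t).
  move=> t /andP[t1 t2]; apply: heV; rewrite /ball /= ltr_norml.
  have h1 : tau' <= ts + e / 2 by rewrite /tau' ge_min lexx orbT.
  clearbody ts tau'; apply/andP; split; lra.
have Vtau : V (g tau) by apply: inV; rewrite lexx tt'.
have [c [tc ec]] : exists c, torus m c /\ sg tau = act c (s (g tau)).
  apply: pi_orbit; rewrite ps // psg //; first by rewrite atau lexx.
pose sg2 t := act c (s (g (clamp tau tau' t))).
have csg2 : continuous sg2.
  move=> t; rewrite /sg2.
  apply: (@continuous_comp _ _ _ (fun t => s (g (clamp tau tau' t))) (act c)); last exact: act_cont.
  apply: (@continuous_comp _ _ _ (fun t => g (clamp tau tau' t)) s); last first.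
    by apply: cs; apply: inV; apply: clamp_in.
  apply: (@continuous_comp _ _ _ (clamp tau tau') g); last exact: cg.
  exact: cont_clamp.
pose sg' t := if t <= tau then sg t else sg2 t.
have Atau' : A tau'.
  split; first by rewrite (le_trans atau tt') /tau' ge_min lexx.
  exists sg'; split.
    apply: glue_cont => //.
    by rewrite /sg2 clamp_id ?lexx ?tt'.
  split; first by rewrite /sg' atau.
  move=> t /andP[hat tt]; rewrite /sg'; case: ifP => [ttau|/negbT].
    by apply: psg; rewrite hat ttau.
  rewrite -ltNge => taut; rewrite /sg2 pi_act // ps; last first.
    by apply: inV; apply: clamp_in.
  by rewrite clamp_id // (ltW taut) tt.
have t'ts : tau' <= ts by exact: (sup_upper_bound hsA Atau').
have tb : tau' = b.
  have [h|h] := leP b (ts + e / 2); first by rewrite /tau' min_l.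
  have h3 : tau' = ts + e / 2 by rewrite /tau' min_r // ltW.
  rewrite h3 in t'ts; exfalso; clearbody ts; lra.
have Ab : A b by rewrite -tb.
by case: Ab => _.
Qed.
End Main.

Definition x1 (t : R) : R := clamp (-1) 1 (1 - 2 * t).
Definition x2 (t : R) : R := clamp (-1) 1 (2 * t - 3).
Definition P (t : R) : C :=
  if t <= 1 then (x1 t, Num.sqrt (1 - x1 t ^+ 2)) else (x2 t, - Num.sqrt (1 - x2 t ^+ 2)).

Lemma m1le1 : (-1 : R) <= 1.
Proof. lra. Qed.

Lemma sq_le1 (x : R) : -1 <= x <= 1 -> 0 <= 1 - x ^+ 2.
Proof. move=> /andP[h1 h2]; rewrite expr2; nra. Qed.

Lemma clamp_sq t : 0 <= 1 - clamp (-1) 1 t ^+ 2.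
Proof. exact: sq_le1 (clamp_in _ m1le1). Qed.

Lemma U1_P t : U1 (P t).
Proof.
rewrite /P /U1 /cnorm2; case: ifP => _ /=; rewrite ?sqrrN sqr_sqrtr ?clamp_sq //;
  by rewrite addrC subrK.
Qed.

Lemma cont_affine (a b : R) : continuous (fun t : R => a + b * t).
Proof.
move=> t; apply: (@cvgD _ R^o); first exact: cvg_cst.
by apply: cvgM; [exact: cvg_cst|exact: cvg_id].
Qed.

Lemma cont_x1 : continuous x1.
Proof.
move=> t; rewrite /x1.
have -> : (fun t => clamp (-1) 1 (1 - 2 * t)) = clamp (-1) 1 \o (fun t => 1 + (-2) * t).
  by apply: funext => s /=; rewrite mulNr.
apply: continuous_comp; [exact: cont_affine|apply: cont_clamp; exact: m1le1].
Qed.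

Lemma cont_x2 : continuous x2.
Proof.
move=> t; rewrite /x2.
have -> : (fun t => clamp (-1) 1 (2 * t - 3)) = clamp (-1) 1 \o (fun t => -3 + 2 * t).
  by apply: funext => s /=; rewrite addrC.
apply: continuous_comp; [exact: cont_affine|apply: cont_clamp; exact: m1le1].
Qed.

Lemma cont_branch (x : R -> R) (sgn : R) : continuous x ->
  continuous (fun t => (x t, sgn * Num.sqrt (1 - x t ^+ 2)) : C).
Proof.
move=> cx t; apply: cont_C; first exact: cx.
rewrite /continuous_at /=; apply: cvgM; first exact: cvg_cst.
apply: (@continuous_comp _ _ _ (fun t => 1 - x t ^+ 2) Num.sqrt); last exact: sqrt_continuous.
apply: (@cvgB _ R^o); first exact: cvg_cst.
apply: (@cont_sq _ x t); exact: cx.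
Qed.

Lemma x1_1 : x1 1 = -1.
Proof. by rewrite /x1 clamp_id; [lra|apply/andP; split; lra]. Qed.
Lemma x2_1 : x2 1 = -1.
Proof. by rewrite /x2 clamp_id; [lra|apply/andP; split; lra]. Qed.

Lemma cont_P : continuous P.
Proof.
have e1 : (fun t => (x1 t, Num.sqrt (1 - x1 t ^+ 2)) : C) =
          (fun t => (x1 t, 1 * Num.sqrt (1 - x1 t ^+ 2))) by apply: funext => t; rewrite mul1r.
have e2 : (fun t => (x2 t, - Num.sqrt (1 - x2 t ^+ 2)) : C) =
          (fun t => (x2 t, (-1) * Num.sqrt (1 - x2 t ^+ 2))) by apply: funext => t; rewrite mulN1r.
rewrite /P; apply: glue_cont.
- rewrite e1; exact: cont_branch cont_x1.
- rewrite e2; exact: cont_branch cont_x2.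
- by rewrite x1_1 x2_1 expr2 mulN1r opprK subrr sqrtr0 oppr0.
Qed.

Lemma P0 : P 0 = cone.
Proof.
rewrite /P ler01 /x1 mulr0 subr0 clamp_id; last by apply/andP; split; lra.
by rewrite expr1n subrr sqrtr0.
Qed.

Lemma P2 : P 2 = cone.
Proof.
rewrite /P ifF; last by apply/negbTE; rewrite -ltNge; lra.
rewrite /x2 clamp_id; last by apply/andP; split; lra.
have -> : 2 * 2 - 3 = 1 :> R by lra.
by rewrite expr1n subrr sqrtr0 oppr0.
Qed.

Lemma U1_bound z : U1 z -> -1 <= z.1 <= 1.
Proof.
case: z => x y; rewrite /U1 /cnorm2 /= => h.
have hy : 0 <= y ^+ 2 by exact: sqr_ge0.
move: h hy; rewrite !expr2 => h hy; apply/andP; split; nra.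
Qed.

Lemma P_surj z : U1 z -> exists t, 0 <= t <= 2 /\ P t = z.
Proof.
move=> hz; have /andP[xl xu] := U1_bound hz.
case: z hz xl xu => x y; rewrite /U1 /cnorm2 /= => h xl xu.
have hy : 1 - x ^+ 2 = y ^+ 2 by rewrite -h addrC addKr.
have [y0|y0] := leP 0 y.
  exists ((1 - x) / 2); split; first by apply/andP; split; lra.
  have x1E : x1 ((1 - x) / 2) = x.
    rewrite /x1 clamp_id; first by field.
    by apply/andP; split; lra.
  rewrite /P ifT; last by lra.
  by rewrite x1E hy sqrtr_sqr ger0_norm.
have xm : -1 < x.
  rewrite lt_neqAle xl andbT; apply/eqP => ex.
  move: hy; rewrite -ex expr2 mulN1r opprK subrr => /esym/eqP.
  by rewrite sqrf_eq0 => /eqP y00; move: y0; rewrite y00 ltxx.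
exists ((x + 3) / 2); split; first by apply/andP; split; lra.
have x2E : x2 ((x + 3) / 2) = x.
  rewrite /x2 clamp_id; first by field.
  by apply/andP; split; lra.
rewrite /P ifF; last by apply/negbTE; rewrite -ltNge; lra.
by rewrite x2E hy sqrtr_sqr ltr0_norm // opprK.
Qed.

Lemma P_inj t t' : 0 <= t <= 2 -> 0 <= t' <= 2 -> P t = P t' ->
  t = t' \/ (t = 0 /\ t' = 2) \/ (t = 2 /\ t' = 0).
Proof.
move=> /andP[t0 t2] /andP[t'0 t'2].
have x1E s : 0 <= s <= 1 -> x1 s = 1 - 2 * s.
  by move=> /andP[? ?]; rewrite /x1 clamp_id //; apply/andP; split; lra.
have x2E s : 1 < s <= 2 -> x2 s = 2 * s - 3.
  by move=> /andP[? ?]; rewrite /x2 clamp_id //; apply/andP; split; lra.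
have key : forall s s', 0 <= s <= 1 -> 1 < s' <= 2 ->
    x1 s = x2 s' -> Num.sqrt (1 - x1 s ^+ 2) = - Num.sqrt (1 - x2 s' ^+ 2) ->
    s = 0 /\ s' = 2.
  move=> s s' hs hs' e1 e2.
  have h0 : Num.sqrt (1 - x1 s ^+ 2) = 0.
    have := sqrtr_ge0 (1 - x1 s ^+ 2); have := sqrtr_ge0 (1 - x2 s' ^+ 2).
    move: e2; clear; lra.
  move/eqP: h0; rewrite sqrtr_eq0 => hle.
  move: e1 hle; rewrite x1E // x2E // => e1 hle.
  move: hs hs' => /andP[? ?] /andP[? ?].
  have : (1 - 2 * s) ^+ 2 >= 1 by lra.
  rewrite expr2 => hq; split; nra.
rewrite /P; case: ifP => ht; case: ifP => ht' [e1 e2].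
- left; move: e1; rewrite !x1E ?ht ?ht' ?t0 ?t'0 //; lra.
- have /andP[? ?] : (1 < t') && (t' <= 2) by rewrite t'2 andbT ltNge ht'.
  right; left; apply: key => //; first by rewrite t0 ht.
  by apply/andP; split.
- have h1 : 1 < t by rewrite ltNge ht.
  have [a b] : t' = 0 /\ t = 2.
    apply: key; first by rewrite t'0 ht'.
    - by rewrite h1 t2.
    - by rewrite e1.
    - by rewrite e2.
  by right; right.
- left; have h1 : 1 < t by rewrite ltNge ht.
  have h1' : 1 < t' by rewrite ltNge ht'.
  move: e1; rewrite !x2E ?h1 ?h1' ?t2 ?t'2 //; lra.
Qed.

Lemma C_hausdorff : hausdorff_space C.
Proof. exact: (@norm_hausdorff Rdefinitions.R (Rdefinitions.R^o * Rdefinitions.R^o)%type). Qed.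

Lemma cont_cmul (a : C) : continuous (cmul a).
Proof.
move=> z; apply: cont_C; rewrite /continuous_at /cmul /=.
- apply: (@cvgB _ R^o); (apply: cvgM; [exact: cvg_cst|]); [exact: cont_C1|exact: cont_C2].
- apply: (@cvgD _ R^o); (apply: cvgM; [exact: cvg_cst|]); [exact: cont_C2|exact: cont_C1].
Qed.

Lemma cmul_cancel a x y : U1 a -> cmul a x = cmul a y -> x = y.
Proof.
move=> ha e; rewrite -(cmul1 x) -(cmul1 y) -(cmul_conjU1 ha) -!cmulA.
by rewrite e.
Qed.

Lemma cmul_conj_inv a w : U1 a -> cmul a (cmul (cconj a) w) = w.
Proof. by move=> ha; rewrite cmulA (cmulC a) cmul_conjU1 // cmul1. Qed.

Unset Implicit Arguments.
Theorem mainTheorem2 (m : nat) (X Q : topologicalType)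
    (act : 'rV[C]_m -> X -> X) (pi : X -> Q) :
  locally_standard_over_graph act ->
  orbit_projection act pi ->
  loop_graph_orbit_space act pi ->
  exists s : Q -> X, continuous s /\ (forall q, pi (s q) = q).
Proof.
move=> HX Hpi [[h [ch [hi [chi [hA hB]]]]] [v _]].
have Hact : torus_action act by case: HX => _ [_ [_ [_ [? _]]]].
have hvU : U1 (h v) by exact: (hA v I).1.
set hv := h v in hvU.
pose G t := hi (cmul hv (P t)).
have UG t : U1 (cmul hv (P t)) by apply: U1_mul hvU (U1_P t).
have cG : continuous G.
  move=> t; apply: (@cont_comp_within _ _ _ (fun t => cmul hv (P t)) hi U1) => //.
  - apply: (@continuous_comp _ _ _ P (cmul hv)); [exact: cont_P|exact: cont_cmul].
  - by near=> z; apply: UG.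
have hiE : forall q, hi (h q) = q by move=> q; exact: (hA q I).2.
have hhE : forall w, U1 w -> h (hi w) = w by move=> w /hB [].
have G0 : G 0 = v by rewrite /G P0 cmulC cmul1 hiE.
have G2 : G 2 = v by rewrite /G P2 cmulC cmul1 hiE.
set xv := pk Hpi v.
have pxv : pi xv = G 0 by rewrite G0 pkP.
have [sg [csg [sg0 psg]]] := lift Hact Hpi HX cG (ler0n _ 2) pxv.
have [c [tc ec]] : exists c, torus m c /\ sg 2 = act c xv.
  apply: (pi_orbit Hpi); rewrite psg ?G2 ?pkP //; apply/andP; split; [exact: ler0n|exact: lexx].
have tE : forall i, exists t, 0 <= t <= 2 /\ P t = (tinv c) ord0 i.
  by move=> i; apply: P_surj; exact: torus_tinv tc i.
pose ti i := proj1_sig (cid (tE i)).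
have tiP i : 0 <= ti i <= 2 /\ P (ti i) = (tinv c) ord0 i := proj2_sig (cid (tE i)).
pose d t : 'rV[C]_m := \row_i P (clamp 0 2 t * (ti i / 2)).
have td t : torus m (d t) by move=> i; rewrite /d mxE; exact: U1_P.
have cd : continuous d.
  move=> t; rewrite /d; apply: cont_rowF => i.
  apply: (@continuous_comp _ _ _ (fun t => clamp 0 2 t * (ti i / 2)) P); last exact: cont_P.
  rewrite /continuous_at; apply: cvgM; last exact: cvg_cst.
  apply: cont_clamp; exact: ler0n.
have c00 : clamp 0 2 0 = 0 :> R by rewrite clamp_id // lexx ler0n.
have c22 : clamp 0 2 2 = 2 :> R by rewrite clamp_id // lexx ler0n.
have d0 : d 0 = tone m by apply/rowP => i; rewrite /d /tone !mxE c00 mul0r P0.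
have d2 : d 2 = tinv c.
  apply/rowP => i; rewrite /d !mxE c22 mulrC -mulrA mulVf ?mulr1; last by rewrite pnatr_eq0.
  by have [_ ->] := tiP i; rewrite mxE.
pose sg' t := act (d t) (sg t).
have csg' : continuous sg'.
  move=> t; apply: (@cont_comp_within _ _ _ (fun t => (d t, sg t)) (fun p => act p.1 p.2)
     (torus m `*` setT)).
  - by apply: cont_pair; [exact: cd|exact: csg].
  - near=> s; split; [exact: td|done].
  - by case: Hact => _ [_ ?].
have sg'0 : sg' 0 = xv by rewrite /sg' d0 act1 // sg0.
have sg'2 : sg' 2 = xv by rewrite /sg' d2 ec act_inv.
have psg' t : 0 <= t <= 2 -> pi (sg' t) = G t by move=> ht; rewrite /sg' pi_act // psg.
have tq q : exists t, 0 <= t <= 2 /\ G t = q.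
  have hz : U1 (cmul (cconj hv) (h q)) by apply: U1_mul; [exact: cconjU1|exact: (hA q I).1].
  have [t [t02 et]] := P_surj hz.
  by exists t; split => //; rewrite /G et cmul_conj_inv // hiE.
pose T q := proj1_sig (cid (tq q)).
have TP q : 0 <= T q <= 2 /\ G (T q) = q := proj2_sig (cid (tq q)).
have hT q : h q = cmul hv (P (T q)).
  by have [_ e] := TP q; rewrite -{1}e /G hhE.
exists (fun q => sg' (T q)); split; last first.
  by move=> q; have [t02 e] := TP q; rewrite psg'.
apply/continuous_closedP => F cF.
have eqF : (fun q => sg' (T q)) @^-1` F =
    h @^-1` ((fun t => cmul hv (P t)) @` (`[0, 2] `&` sg' @^-1` F)).
  apply/seteqP; split => q /=.
    move=> Fq; exists (T q); last by rewrite hT.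
    by split => //; have [t02 _] := TP q; rewrite in_itv.
  move=> [t [t02 Ft] e]; rewrite hT in e.
  have pe := cmul_cancel hvU e.
  move: t02; rewrite /= in_itv => t02.
  have [t02' _] := TP q.
  have [e1|[[e1 e2]|[e1 e2]]] := P_inj t02 t02' pe.
  - by rewrite -e1.
  - by rewrite e2 sg'2 -sg'0 -e1.
  - by rewrite e2 sg'0 -sg'2 -e1.
rewrite eqF.
have chc : continuous h by apply/continuous_subspace_setT.
move/continuous_closedP: chc; apply.
apply: compact_closed; first exact: C_hausdorff.
apply: continuous_compact.
  apply: continuous_subspaceT => t.
  apply: (@continuous_comp _ _ _ P (cmul hv)); [exact: cont_P|exact: cont_cmul].
apply: compact_closedI; first exact: segment_compact.
by move/continuous_closedP: csg'; apply.
Unshelve. all: end_near.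
Qed.
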